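(* Let $k$ be a field, let $\mathrm{\underline{Rep}}(\mathbb{G})$ be the Delannoy category over $k$, and let $X$ be a $\mathbb{G}$-set. Identify $\Gamma(\mathcal{C}(X)\otimes\mathcal{C}(X))=\Gamma(\mathcal{C}(X\times X))$ with the algebra of $\mathbb{G}$-invariant $k$-valued functions on $X\times X$ under pointwise multiplication. Then an element $\gamma$ of this algebra is an E-idempotent of $\mathcal{C}(X)$ if and only if it is the indicator function of a $\mathbb{G}$-stable equivalence relation $R\subset X\times X$; thus E-idempotents of $\mathcal{C}(X)$ correspond bijectively to $\mathbb{G}$-stable equivalence relations on $X$.
   Context: $\mathbb{G}=\mathrm{Aut}(\mathbf{R},<)$, topologized so that pointwise stabilizers of finite subsets form a neighborhood basis of $1$; a $\mathbb{G}$-set is a set with an action having open stabilizers and finitely many orbits. The Delannoy category is the Karoubi envelope of Harman–Snowden's $\mathrm{\underline{Perm}}(\mathbb{G},\mu)$ for the measure $\mu$ with $\mu(\mathbf{R}^{(n)})=(-1)^n$; its objects $\mathcal{C}(X)$ (Schwartz spaces) are étale commutative algebras, $\mathcal{C}(X)\otimes\mathcal{C}(Y)=\mathcal{C}(X\times Y)$, and $\Gamma(\mathcal{C}(X))=\mathrm{Hom}(\mathbf{1},\mathcal{C}(X))$ is the algebra of $\mathbb{G}$-invariant functions on $X$ under pointwise multiplication. For an étale algebra $B$, an E-idempotent is an idempotent $\gamma\in\Gamma(B\otimes B)$ such that (a) $m(\gamma)=1$ where $m:B\otimes B\to B$ is multiplication; (b) $\tau(\gamma)=\gamma$ where $\tau$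 is the symmetry of $B\otimes B$; (c) writing $\gamma_{i,j}\in\Gamma(B^{\otimes3})$ for $\gamma$ placed in factors $i,j$ and $1$ in the remaining factor, $\gamma_{1,2}\gamma_{2,3}=\gamma_{1,2}\gamma_{1,3}=\gamma_{1,3}\gamma_{2,3}$. *)

(* Defs.v *)
From Stdlib Require Import Reals.
From mathcomp Require Import all_boot all_algebra.
Set Implicit Arguments. Unset Strict Implicit. Unset Printing Implicit Defensive.
Import GRing.Theory.

(* Elements of G = Aut(R,<): order-preserving bijections of the real line. *)
Record ordAut := OrdAut {
  oa_fun : R -> R;
  oa_inv : R -> R;
  oa_K : forall t, oa_inv (oa_fun t) = t;
  oa_Kinv : forall t, oa_fun (oa_inv t) = t;
  oa_mono : forall s t, Rlt s t -> Rlt (oa_fun s) (oa_fun t)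
}.

(* A G-set: an action of G on X (axioms stated extensionally on the
   underlying functions), with open stabilizers (each stabilizer contains
   the pointwise stabilizer of a finite subset of R) and finitely many orbits. *)
Definition is_Gset (X : Type) (act : ordAut -> X -> X) : Prop :=
  [/\ (forall g : ordAut, (forall t, oa_fun g t = t) -> forall x, act g x = x),
      (forall g h gh : ordAut, (forall t, oa_fun gh t = oa_fun g (oa_fun h t)) ->
          forall x, act gh x = act g (act h x)),
      (forall x : X, exists (n : nat) (A : 'I_n -> R),
          forall g : ordAut, (forall i, oa_fun g (A i) = A i) -> act g x = x)
    & (exists (n : nat) (xs : 'I_n -> X),
          forall x : X, exists (i : 'I_n) (g : ordAut), x = act g (xs i))].

(* Gamma(C(X) (x) C(X)) = Gamma(C(X x X)) = G-invariant k-valued functions on X x X. *)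
Definition G_invariant2 (k : fieldType) (X : Type) (act : ordAut -> X -> X)
  (gamma : X * X -> k) : Prop :=
  forall (g : ordAut) (x y : X), gamma (act g x, act g y) = gamma (x, y).

(* Under the identification, with pointwise multiplication:
   - multiplication m : C(X x X) -> C(X) is pullback along the diagonal;
   - the symmetry tau is pullback along the swap (x,y) |-> (y,x);
   - gamma_{i,j} in Gamma(C(X x X x X)) is gamma evaluated at coordinates i,j. *)
Definition m_diag (k : fieldType) (X : Type) (gamma : X * X -> k) : X -> k :=
  fun x => gamma (x, x).
Definition tau_swap (k : fieldType) (X : Type) (gamma : X * X -> k) : X * X -> k :=
  fun p => gamma (p.2, p.1).
Definition gamma12 (k : fieldType) (X : Type) (gamma : X * X -> k) : X * X * X -> k :=
  fun p => gamma (p.1.1, p.1.2).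
Definition gamma13 (k : fieldType) (X : Type) (gamma : X * X -> k) : X * X * X -> k :=
  fun p => gamma (p.1.1, p.2).
Definition gamma23 (k : fieldType) (X : Type) (gamma : X * X -> k) : X * X * X -> k :=
  fun p => gamma (p.1.2, p.2).

Definition is_E_idempotent (k : fieldType) (X : Type) (act : ordAut -> X -> X)
  (gamma : X * X -> k) : Prop :=
  [/\ G_invariant2 act gamma,
      (forall p, (gamma p * gamma p = gamma p)%R),
      (forall x, m_diag gamma x = 1%R),
      (forall p, tau_swap gamma p = gamma p)
    & (forall p, (gamma12 gamma p * gamma23 gamma p = gamma12 gamma p * gamma13 gamma p)%R
              /\ (gamma12 gamma p * gamma13 gamma p = gamma13 gamma p * gamma23 gamma p)%R)].

Definition G_stable_equivalence (X : Type) (act : ordAut -> X -> X)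
  (Rel : X -> X -> bool) : Prop :=
  [/\ (forall x, Rel x x),
      (forall x y, Rel x y -> Rel y x),
      (forall x y z, Rel x y -> Rel y z -> Rel x z)
    & (forall (g : ordAut) x y, Rel x y -> Rel (act g x) (act g y))].

Definition indicator (k : fieldType) (X : Type) (Rel : X -> X -> bool) : X * X -> k :=
  fun p => ((Rel p.1 p.2)%:R)%R.

(* Main.v *)
Require Import Defs.
From Stdlib Require Import Reals.
From mathcomp Require Import all_boot all_algebra.
From Stdlib Require Import FunctionalExtensionality.
Import GRing.Theory.

Lemma idem01 (k : fieldType) (a : k) : (a * a = a)%R -> a = 0%R \/ a = 1%R.
Proof.
move=> h.
have : (a * (a - 1) = 0)%R by rewrite mulrBr mulr1 h subrr.
move/eqP; rewrite mulf_eq0 => /orP [/eqP -> | ]; first by left.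
by rewrite subr_eq0 => /eqP ->; right.
Qed.

Lemma natb_inj (k : fieldType) (a b : bool) :
  ((a%:R : k) = b%:R)%R -> a = b.
Proof.
case: a; case: b => //= /eqP; rewrite ?mulr1n ?mulr0n ?oner_eq0 //.
by rewrite eq_sym oner_eq0.
Qed.

Theorem proposition3p2 (k : fieldType) (X : Type) (act : ordAut -> X -> X)
  (HX : is_Gset act) :
  (forall gamma : X * X -> k, G_invariant2 act gamma ->
     (is_E_idempotent act gamma <->
      exists Rel : X -> X -> bool,
        G_stable_equivalence act Rel /\ gamma = indicator k Rel))
  /\
  (forall Rel1 Rel2 : X -> X -> bool,
     G_stable_equivalence act Rel1 -> G_stable_equivalence act Rel2 ->
     indicator k Rel1 = indicator k Rel2 -> Rel1 = Rel2).
Proof.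
split.
  move=> gamma Ginv; split.
    case=> _ Hid Hdiag Hsw Htr.
    have H01 p : gamma p = 0%R \/ gamma p = 1%R by apply: idem01.
    exists (fun x y => gamma (x, y) == 1%R); split.
      split.
      - by move=> x; apply/eqP; apply: Hdiag.
      - by move=> x y /eqP h; apply/eqP; rewrite -(Hsw (x, y)) /tau_swap /= in h.
      - move=> x y z /eqP h1 /eqP h2; apply/eqP.
        have [h _] := Htr ((x, y), z).
        move: h; rewrite /gamma12 /gamma23 /gamma13 /= h1 h2 !mul1r => <-. done.
      - by move=> g x y /eqP h; apply/eqP; rewrite Ginv.
    apply: functional_extensionality => [[x y]]; rewrite /indicator /=.
    by case: (H01 (x, y)) => ->; rewrite ?eqxx // eq_sym oner_eq0.
  case=> Rel [[Hr Hs Ht Hg] Eg]; rewrite Eg in Ginv *; split => //.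
  - by move=> [x y]; rewrite /indicator /=; case: (Rel x y); rewrite ?mulr1 ?mulr0.
  - by move=> x; rewrite /m_diag /indicator /= Hr.
  - move=> [x y]; rewrite /tau_swap /indicator /=.
    have -> : Rel y x = Rel x y by apply/idP/idP => /Hs.
    done.
  - move=> [[x y] z]; rewrite /gamma12 /gamma23 /gamma13 /indicator /=.
    case exy: (Rel x y); case eyz: (Rel y z); case exz: (Rel x z);
      rewrite ?mulr1 ?mulr0 ?mul0r ?mul1r //; exfalso.
    + by move: (Ht _ _ _ exy eyz); rewrite exz.
    + by move: (Ht _ _ _ (Hs _ _ exy) exz); rewrite eyz.
    + by move: (Ht _ _ _ exz (Hs _ _ eyz)); rewrite exy.
move=> R1 R2 _ _ h.
apply: functional_extensionality => x; apply: functional_extensionality => y.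
have := f_equal (fun f => f (x, y)) h; rewrite /indicator /=.
exact: natb_inj.
Qed.
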